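(* Let $\mathbf{S}$ be any one of the four systems $\mathbf{G3N}$, $\mathbf{G3NeF}$, $\mathbf{G3CoPC}$, $\mathbf{G3MPC}$. The contraction rule ''from $\Gamma,\alpha,\alpha\Rightarrow\varphi$ infer $\Gamma,\alpha\Rightarrow\varphi$'' is height-preserving admissible in $\mathbf{S}$: for all finite multisets $\Gamma$ and formulas $\alpha,\varphi$, if $\Gamma,\alpha,\alpha\Rightarrow\varphi$ has a derivation in $\mathbf{S}$ of height at most $n$, then $\Gamma,\alpha\Rightarrow\varphi$ has a derivation in $\mathbf{S}$ of height at most $n$.
   Context: Formulas are generated from a countable set of propositional variables $p,q,\dots$ and the constant $\top$ by the grammar $\varphi::= p\mid\top\mid\varphi\wedge\varphi\mid\varphi\vee\varphi\mid\varphi\to\varphi\mid\neg\varphi$ (there is no constant $\bot$). $\varphi\leftrightarrow\psi$ abbreviates $(\varphi\to\psi)\wedge(\psi\to\varphi)$. A sequent is an expression $\Gamma\Rightarrow\varphi$ where $\Gamma$ is a finite multiset of formulas and $\varphi$ is a formula (the goal); $\Gamma,\Delta$ denotes multiset union and $\Gamma,\alpha$ denotes $\Gamma$ with one more occurrence of $\alpha$. Rules ($p$ a propositional variable): (ax) $\Gamma,p\Rightarrow p$ (no premises); ($\top$) $\Gamma\Rightarrow\top$ (no premises); ($\to$r) from $\Gamma,\alpha\Rightarrow\beta$ infer $\Gamma\Rightarrow\alpha\to\beta$; ($\to$l) from $\Gamma,\alpha\to\beta\Rightarrow\alpha$ and $\Gamma,\beta\Rightarrow\varphi$ infer $\Gamma,\alpha\to\beta\Rightarrow\varphi$;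 ($\wedge$r) from $\Gamma\Rightarrow\alpha$ and $\Gamma\Rightarrow\beta$ infer $\Gamma\Rightarrow\alpha\wedge\beta$; ($\wedge$l) from $\Gamma,\alpha,\beta\Rightarrow\varphi$ infer $\Gamma,\alpha\wedge\beta\Rightarrow\varphi$; ($\vee$r$_1$), ($\vee$r$_2$) from $\Gamma\Rightarrow\alpha$ (resp. $\Gamma\Rightarrow\beta$) infer $\Gamma\Rightarrow\alpha\vee\beta$; ($\vee$l) from $\Gamma,\alpha\Rightarrow\varphi$ and $\Gamma,\beta\Rightarrow\varphi$ infer $\Gamma,\alpha\vee\beta\Rightarrow\varphi$; (n) from $\Gamma,\neg\alpha,\beta\Rightarrow\alpha$ and $\Gamma,\neg\alpha,\alpha\Rightarrow\beta$ infer $\Gamma,\neg\alpha\Rightarrow\neg\beta$; (nef) from $\Gamma,\neg\alpha\Rightarrow\alpha$ infer $\Gamma,\neg\alpha\Rightarrow\neg\beta$; (copc) from $\Gamma,\neg\alpha,\beta\Rightarrow\alpha$ infer $\Gamma,\neg\alpha\Rightarrow\neg\beta$; (an) from $\Gamma,\alpha\Rightarrow\neg\alpha$ infer $\Gamma\Rightarrow\neg\alpha$. The rules (ax) through ($\vee$l) are the positive rules. The four systems are: $\mathbf{G3N}$ = positive rules + (n); $\mathbf{G3NeF}$ = positive rules + (n) + (nef); $\mathbf{G3CoPC}$ = positive rules + (copc); $\mathbf{G3MPC}$ = positive rules + (copc) + (an). None of them contains weakening, contraction or cut as a rule. A derivation is a finite tree of rule instances with leaves instances of (ax) or ($\top$);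 its height is the number of inference steps on a longest branch. A sequent is derivable if it has a derivation; a formula $\varphi$ is a theorem if $\Rightarrow\varphi$ (empty antecedent) is derivable. *)

(* Defs.v *)
From Stdlib Require Import List Permutation.
Import ListNotations.

Inductive form : Type :=
| Var : nat -> form
| Top : form
| And : form -> form -> form
| Or  : form -> form -> form
| Imp : form -> form -> form
| Neg : form -> form.

Inductive system : Type := G3N | G3NeF | G3CoPC | G3MPC.

Definition has_n (Sy : system) : bool :=
  match Sy with G3N | G3NeF => true | _ => false end.
Definition has_nef (Sy : system) : bool :=
  match Sy with G3NeF => true | _ => false end.
Definition has_copc (Sy : system) : bool :=
  match Sy with G3CoPC | G3MPC => true | _ => false end.
Definition has_an (Sy : system) : bool :=
  match Sy with G3MPC => true | _ => false end.

(* Antecedents are multisets: the constructor dh_perm identifies lists up to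
   permutation (it is not an inference step and does not increase height). *)
Inductive dh (Sy : system) : nat -> list form -> form -> Prop :=
| dh_perm : forall n G G' phi, Permutation G G' -> dh Sy n G phi -> dh Sy n G' phi
| dh_ax : forall n G p, dh Sy n (Var p :: G) (Var p)
| dh_top : forall n G, dh Sy n G Top
| dh_impR : forall n G a b, dh Sy n (a :: G) b -> dh Sy (S n) G (Imp a b)
| dh_impL : forall n G a b phi,
    dh Sy n (Imp a b :: G) a -> dh Sy n (b :: G) phi -> dh Sy (S n) (Imp a b :: G) phi
| dh_andR : forall n G a b, dh Sy n G a -> dh Sy n G b -> dh Sy (S n) G (And a b)
| dh_andL : forall n G a b phi, dh Sy n (a :: b :: G) phi -> dh Sy (S n) (And a b :: G) phi
| dh_orR1 : forall n G a b, dh Sy n G a -> dh Sy (S n) G (Or a b)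
| dh_orR2 : forall n G a b, dh Sy n G b -> dh Sy (S n) G (Or a b)
| dh_orL : forall n G a b phi,
    dh Sy n (a :: G) phi -> dh Sy n (b :: G) phi -> dh Sy (S n) (Or a b :: G) phi
| dh_n : forall n G a b, has_n Sy = true ->
    dh Sy n (Neg a :: b :: G) a -> dh Sy n (Neg a :: a :: G) b ->
    dh Sy (S n) (Neg a :: G) (Neg b)
| dh_nef : forall n G a b, has_nef Sy = true ->
    dh Sy n (Neg a :: G) a -> dh Sy (S n) (Neg a :: G) (Neg b)
| dh_copc : forall n G a b, has_copc Sy = true ->
    dh Sy n (Neg a :: b :: G) a -> dh Sy (S n) (Neg a :: G) (Neg b)
| dh_an : forall n G a, has_an Sy = true ->
    dh Sy n (a :: G) (Neg a) -> dh Sy (S n) G (Neg a).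

(* Main.v *)
Require Import Defs.
From Stdlib Require Import List Permutation.
From Stdlib Require Import Setoid Morphisms Arith Wf_nat.
Import ListNotations.

Lemma perm_front_step (A : Type) (x y : A) r' r3 :
  Permutation r' (x :: r3) -> Permutation (y :: r') (x :: y :: r3).
Proof. intro H. rewrite H. apply perm_swap. Qed.

Lemma perm_cons_front (A : Type) (x : A) l r r2 :
  Permutation r (x :: r2) -> Permutation l r2 -> Permutation (x :: l) r.
Proof. intros H1 H2. rewrite H1, H2. reflexivity. Qed.

Ltac pfront := first [ apply Permutation_refl | apply perm_front_step; pfront ].
Ltac pm := first [ apply Permutation_refl
                 | eapply perm_cons_front; [ pfront | pm ] ].

Lemma perm_split (X : form) G0 Y G :
  Permutation (X :: G0) (Y :: G) ->
  (X = Y /\ Permutation G0 G) \/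
  exists G1, Permutation G0 (Y :: G1) /\ Permutation G (X :: G1).
Proof.
  intro H.
  assert (Hin : In Y (X :: G0)) by
    (apply (Permutation_in Y (Permutation_sym H)); left; auto).
  destruct Hin as [E|Hin].
  - left; subst; split; auto. eapply Permutation_cons_inv; eauto.
  - right. apply in_split in Hin as [l1 [l2 E]]. subst. exists (l1 ++ l2). split.
    + apply Permutation_sym, Permutation_middle.
    + apply Permutation_cons_inv with Y. eapply perm_trans; [apply Permutation_sym, H|].
      eapply perm_trans; [apply perm_skip, Permutation_sym, Permutation_middle|].
      apply perm_swap.
Qed.

Lemma perm_split2 (X : form) G0 a G :
  Permutation (X :: G0) (a :: a :: G) ->
  (X = a /\ Permutation G0 (a :: G)) \/
  exists G2, Permutation G0 (a :: a :: G2) /\ Permutation G (X :: G2).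
Proof.
  intro HP. destruct (perm_split _ _ _ _ HP) as [[E H]|[G1 [H1 H2]]].
  - left; auto.
  - destruct (perm_split _ _ _ _ H2) as [[E H]|[G2 [H3 H4]]].
    + left; split; [auto|]. rewrite H1, H; subst; reflexivity.
    + right; exists G2; split; [rewrite H1, H4; reflexivity | auto].
Qed.

Lemma dp Sy n G G' phi : dh Sy n G phi -> Permutation G G' -> dh Sy n G' phi.
Proof. intros D H. eapply dh_perm; eauto. Qed.

Lemma mono Sy n G phi : dh Sy n G phi -> dh Sy (S n) G phi.
Proof.
  induction 1.
  - eapply dh_perm; eauto.
  - apply dh_ax.
  - apply dh_top.
  - apply dh_impR; auto.
  - apply dh_impL; auto.
  - apply dh_andR; auto.
  - apply dh_andL; auto.
  - apply dh_orR1; auto.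
  - apply dh_orR2; auto.
  - apply dh_orL; auto.
  - apply dh_n; auto.
  - apply dh_nef; auto.
  - apply dh_copc; auto.
  - apply dh_an; auto.
Qed.
Lemma inv_and Sy n L phi : dh Sy n L phi ->
  forall c d G, Permutation L (And c d :: G) -> dh Sy n (c :: d :: G) phi.
Proof.
  induction 1 as [n G G' phi HP0 D IH | n G p | n G | n G a b D IH
   | n G a b phi D1 IH1 D2 IH2 | n G a b D1 IH1 D2 IH2 | n G a b phi D IH
   | n G a b D IH | n G a b D IH | n G a b phi D1 IH1 D2 IH2
   | n G a b Hs D1 IH1 D2 IH2 | n G a b Hs D IH | n G a b Hs D IH | n G a Hs D IH];
  intros c0 d0 G0 HP.
  - apply IH. eapply perm_trans; eauto.
  - destruct (perm_split _ _ _ _ HP) as [[E _]|[G1 [H1 H2]]]; [discriminate|].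
    apply (dp _ _ (Var p :: c0 :: d0 :: G1)); [apply dh_ax| rewrite H2; pm].
  - apply dh_top.
  - apply dh_impR. apply (dp _ _ (c0 :: d0 :: a :: G0)); [apply IH; rewrite HP; pm | pm].
  - destruct (perm_split _ _ _ _ HP) as [[E _]|[G1 [H1 H2]]]; [discriminate|].
    apply (dp _ _ (Imp a b :: c0 :: d0 :: G1)); [|rewrite H2; pm].
    apply dh_impL.
    + apply (dp _ _ (c0 :: d0 :: Imp a b :: G1)); [apply IH1; rewrite H1; pm | pm].
    + apply (dp _ _ (c0 :: d0 :: b :: G1)); [apply IH2; rewrite H1; pm | pm].
  - apply dh_andR; auto.
  - destruct (perm_split _ _ _ _ HP) as [[E H]|[G1 [H1 H2]]].
    + injection E as -> ->. apply mono. apply (dp _ _ _ _ _ D). rewrite H; pm.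
    + apply (dp _ _ (And a b :: c0 :: d0 :: G1)); [|rewrite H2; pm].
      apply dh_andL.
      apply (dp _ _ (c0 :: d0 :: a :: b :: G1)); [apply IH; rewrite H1; pm | pm].
  - apply dh_orR1; auto.
  - apply dh_orR2; auto.
  - destruct (perm_split _ _ _ _ HP) as [[E _]|[G1 [H1 H2]]]; [discriminate|].
    apply (dp _ _ (Or a b :: c0 :: d0 :: G1)); [|rewrite H2; pm].
    apply dh_orL.
    + apply (dp _ _ (c0 :: d0 :: a :: G1)); [apply IH1; rewrite H1; pm | pm].
    + apply (dp _ _ (c0 :: d0 :: b :: G1)); [apply IH2; rewrite H1; pm | pm].
  - destruct (perm_split _ _ _ _ HP) as [[E _]|[G1 [H1 H2]]]; [discriminate|].
    apply (dp _ _ (Neg a :: c0 :: d0 :: G1)); [|rewrite H2; pm].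
    apply dh_n; auto.
    + apply (dp _ _ (c0 :: d0 :: Neg a :: b :: G1)); [apply IH1; rewrite H1; pm | pm].
    + apply (dp _ _ (c0 :: d0 :: Neg a :: a :: G1)); [apply IH2; rewrite H1; pm | pm].
  - destruct (perm_split _ _ _ _ HP) as [[E _]|[G1 [H1 H2]]]; [discriminate|].
    apply (dp _ _ (Neg a :: c0 :: d0 :: G1)); [|rewrite H2; pm].
    apply dh_nef; auto.
    apply (dp _ _ (c0 :: d0 :: Neg a :: G1)); [apply IH; rewrite H1; pm | pm].
  - destruct (perm_split _ _ _ _ HP) as [[E _]|[G1 [H1 H2]]]; [discriminate|].
    apply (dp _ _ (Neg a :: c0 :: d0 :: G1)); [|rewrite H2; pm].
    apply dh_copc; auto.
    apply (dp _ _ (c0 :: d0 :: Neg a :: b :: G1)); [apply IH; rewrite H1; pm | pm].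
  - apply dh_an; auto.
    apply (dp _ _ (c0 :: d0 :: a :: G0)); [apply IH; rewrite HP; pm | pm].
Qed.
Lemma inv_or Sy n L phi : dh Sy n L phi ->
  forall c d G, Permutation L (Or c d :: G) -> forall e, e = c \/ e = d -> dh Sy n (e :: G) phi.
Proof.
  induction 1 as [n G G' phi HP0 D IH | n G p | n G | n G a b D IH
   | n G a b phi D1 IH1 D2 IH2 | n G a b D1 IH1 D2 IH2 | n G a b phi D IH
   | n G a b D IH | n G a b D IH | n G a b phi D1 IH1 D2 IH2
   | n G a b Hs D1 IH1 D2 IH2 | n G a b Hs D IH | n G a b Hs D IH | n G a Hs D IH];
  intros c0 d0 G0 HP e He.
  - eapply IH; eauto. eapply perm_trans; eauto.
  - destruct (perm_split _ _ _ _ HP) as [[E _]|[G1 [H1 H2]]]; [discriminate|].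
    apply (dp _ _ (Var p :: e :: G1)); [apply dh_ax| rewrite H2; pm].
  - apply dh_top.
  - apply dh_impR. apply (dp _ _ (e :: a :: G0)); [apply IH with (c:=c0) (d:=d0); auto; rewrite HP; pm | pm].
  - destruct (perm_split _ _ _ _ HP) as [[E _]|[G1 [H1 H2]]]; [discriminate|].
    apply (dp _ _ (Imp a b :: e :: G1)); [|rewrite H2; pm].
    apply dh_impL.
    + apply (dp _ _ (e :: Imp a b :: G1)); [apply IH1 with (c:=c0) (d:=d0); auto; rewrite H1; pm | pm].
    + apply (dp _ _ (e :: b :: G1)); [apply IH2 with (c:=c0) (d:=d0); auto; rewrite H1; pm | pm].
  - apply dh_andR; eauto.
  - destruct (perm_split _ _ _ _ HP) as [[E _]|[G1 [H1 H2]]]; [discriminate|].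
    apply (dp _ _ (And a b :: e :: G1)); [|rewrite H2; pm].
    apply dh_andL.
    apply (dp _ _ (e :: a :: b :: G1)); [apply IH with (c:=c0) (d:=d0); auto; rewrite H1; pm | pm].
  - apply dh_orR1; eauto.
  - apply dh_orR2; eauto.
  - destruct (perm_split _ _ _ _ HP) as [[E H]|[G1 [H1 H2]]].
    + injection E as -> ->. apply mono. destruct He as [-> | ->]; [apply (dp _ _ _ _ _ D1)|apply (dp _ _ _ _ _ D2)]; rewrite H; pm.
    + apply (dp _ _ (Or a b :: e :: G1)); [|rewrite H2; pm].
      apply dh_orL.
      * apply (dp _ _ (e :: a :: G1)); [apply IH1 with (c:=c0) (d:=d0); auto; rewrite H1; pm | pm].
      * apply (dp _ _ (e :: b :: G1)); [apply IH2 with (c:=c0) (d:=d0); auto; rewrite H1; pm | pm].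
  - destruct (perm_split _ _ _ _ HP) as [[E _]|[G1 [H1 H2]]]; [discriminate|].
    apply (dp _ _ (Neg a :: e :: G1)); [|rewrite H2; pm].
    apply dh_n; auto.
    + apply (dp _ _ (e :: Neg a :: b :: G1)); [apply IH1 with (c:=c0) (d:=d0); auto; rewrite H1; pm | pm].
    + apply (dp _ _ (e :: Neg a :: a :: G1)); [apply IH2 with (c:=c0) (d:=d0); auto; rewrite H1; pm | pm].
  - destruct (perm_split _ _ _ _ HP) as [[E _]|[G1 [H1 H2]]]; [discriminate|].
    apply (dp _ _ (Neg a :: e :: G1)); [|rewrite H2; pm].
    apply dh_nef; auto.
    apply (dp _ _ (e :: Neg a :: G1)); [apply IH with (c:=c0) (d:=d0); auto; rewrite H1; pm | pm].
  - destruct (perm_split _ _ _ _ HP) as [[E _]|[G1 [H1 H2]]]; [discriminate|].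
    apply (dp _ _ (Neg a :: e :: G1)); [|rewrite H2; pm].
    apply dh_copc; auto.
    apply (dp _ _ (e :: Neg a :: b :: G1)); [apply IH with (c:=c0) (d:=d0); auto; rewrite H1; pm | pm].
  - apply dh_an; auto.
    apply (dp _ _ (e :: a :: G0)); [apply IH with (c:=c0) (d:=d0); auto; rewrite HP; pm | pm].
Qed.
Lemma inv_imp Sy n L phi : dh Sy n L phi ->
  forall c d G, Permutation L (Imp c d :: G) -> dh Sy n (d :: G) phi.
Proof.
  induction 1 as [n G G' phi HP0 D IH | n G p | n G | n G a b D IH
   | n G a b phi D1 IH1 D2 IH2 | n G a b D1 IH1 D2 IH2 | n G a b phi D IH
   | n G a b D IH | n G a b D IH | n G a b phi D1 IH1 D2 IH2
   | n G a b Hs D1 IH1 D2 IH2 | n G a b Hs D IH | n G a b Hs D IH | n G a Hs D IH];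
  intros c0 d0 G0 HP.
  - apply IH with (c:=c0). eapply perm_trans; eauto.
  - destruct (perm_split _ _ _ _ HP) as [[E _]|[G1 [H1 H2]]]; [discriminate|].
    apply (dp _ _ (Var p :: d0 :: G1)); [apply dh_ax| rewrite H2; pm].
  - apply dh_top.
  - apply dh_impR. apply (dp _ _ (d0 :: a :: G0)); [apply IH with (c:=c0); rewrite HP; pm | pm].
  - destruct (perm_split _ _ _ _ HP) as [[E H]|[G1 [H1 H2]]].
    + injection E as -> ->. apply mono. apply (dp _ _ _ _ _ D2). rewrite H; pm.
    + apply (dp _ _ (Imp a b :: d0 :: G1)); [|rewrite H2; pm].
      apply dh_impL.
      * apply (dp _ _ (d0 :: Imp a b :: G1)); [apply IH1 with (c:=c0); rewrite H1; pm | pm].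
      * apply (dp _ _ (d0 :: b :: G1)); [apply IH2 with (c:=c0); rewrite H1; pm | pm].
  - apply dh_andR; [apply IH1 with (c:=c0)|apply IH2 with (c:=c0)]; auto.
  - destruct (perm_split _ _ _ _ HP) as [[E _]|[G1 [H1 H2]]]; [discriminate|].
    apply (dp _ _ (And a b :: d0 :: G1)); [|rewrite H2; pm].
    apply dh_andL.
    apply (dp _ _ (d0 :: a :: b :: G1)); [apply IH with (c:=c0); rewrite H1; pm | pm].
  - apply dh_orR1; apply IH with (c:=c0); auto.
  - apply dh_orR2; apply IH with (c:=c0); auto.
  - destruct (perm_split _ _ _ _ HP) as [[E _]|[G1 [H1 H2]]]; [discriminate|].
    apply (dp _ _ (Or a b :: d0 :: G1)); [|rewrite H2; pm].
    apply dh_orL.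
    + apply (dp _ _ (d0 :: a :: G1)); [apply IH1 with (c:=c0); rewrite H1; pm | pm].
    + apply (dp _ _ (d0 :: b :: G1)); [apply IH2 with (c:=c0); rewrite H1; pm | pm].
  - destruct (perm_split _ _ _ _ HP) as [[E _]|[G1 [H1 H2]]]; [discriminate|].
    apply (dp _ _ (Neg a :: d0 :: G1)); [|rewrite H2; pm].
    apply dh_n; auto.
    + apply (dp _ _ (d0 :: Neg a :: b :: G1)); [apply IH1 with (c:=c0); rewrite H1; pm | pm].
    + apply (dp _ _ (d0 :: Neg a :: a :: G1)); [apply IH2 with (c:=c0); rewrite H1; pm | pm].
  - destruct (perm_split _ _ _ _ HP) as [[E _]|[G1 [H1 H2]]]; [discriminate|].
    apply (dp _ _ (Neg a :: d0 :: G1)); [|rewrite H2; pm].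
    apply dh_nef; auto.
    apply (dp _ _ (d0 :: Neg a :: G1)); [apply IH with (c:=c0); rewrite H1; pm | pm].
  - destruct (perm_split _ _ _ _ HP) as [[E _]|[G1 [H1 H2]]]; [discriminate|].
    apply (dp _ _ (Neg a :: d0 :: G1)); [|rewrite H2; pm].
    apply dh_copc; auto.
    apply (dp _ _ (d0 :: Neg a :: b :: G1)); [apply IH with (c:=c0); rewrite H1; pm | pm].
  - apply dh_an; auto.
    apply (dp _ _ (d0 :: a :: G0)); [apply IH with (c:=c0); rewrite HP; pm | pm].
Qed.

Definition PC Sy n := forall L phi, dh Sy n L phi ->
  forall a G, Permutation L (a :: a :: G) -> dh Sy n (a :: G) phi.

Lemma contr_step Sy n L phi : dh Sy n L phi ->
  (forall m, m < n -> PC Sy m) ->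
  forall a G, Permutation L (a :: a :: G) -> dh Sy n (a :: G) phi.
Proof.
  induction 1 as [n G G' phi HP0 D IH | n G p | n G | n G a b D IH
   | n G a b phi D1 IH1 D2 IH2 | n G a b D1 IH1 D2 IH2 | n G a b phi D IH
   | n G a b D IH | n G a b D IH | n G a b phi D1 IH1 D2 IH2
   | n G a b Hs D1 IH1 D2 IH2 | n G a b Hs D IH | n G a b Hs D IH | n G a Hs D IH];
  intros IHn a0 G0 HP;
  try (assert (C : PC Sy n) by (apply IHn; auto)).
  - apply IH; auto. eapply perm_trans; eauto.
  - destruct (perm_split2 _ _ _ _ HP) as [[E H]|[G2 [H1 H2]]].
    + subst. apply dh_ax.
    + apply (dp _ _ (Var p :: a0 :: G2)); [apply dh_ax | rewrite H2; pm].
  - apply dh_top.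
  - apply dh_impR. apply (dp _ _ (a0 :: a :: G0)); [apply (C _ _ D); rewrite HP; pm | pm].
  - destruct (perm_split2 _ _ _ _ HP) as [[E H]|[G2 [H1 H2]]].
    + subst. apply dh_impL.
      * apply (C _ _ D1). rewrite H; pm.
      * apply (C _ _ (inv_imp _ _ _ _ D2 a b (b :: G0) ltac:(rewrite H; pm))). pm.
    + apply (dp _ _ (Imp a b :: a0 :: G2)); [|rewrite H2; pm].
      apply dh_impL.
      * apply (dp _ _ (a0 :: Imp a b :: G2)); [apply (C _ _ D1); rewrite H1; pm | pm].
      * apply (dp _ _ (a0 :: b :: G2)); [apply (C _ _ D2); rewrite H1; pm | pm].
  - apply dh_andR; [apply (C _ _ D1) | apply (C _ _ D2)]; auto.
  - destruct (perm_split2 _ _ _ _ HP) as [[E H]|[G2 [H1 H2]]].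
    + subst. apply dh_andL.
      pose proof (inv_and _ _ _ _ D a b (a :: b :: G0) ltac:(rewrite H; pm)) as D'.
      pose proof (C _ _ D' a (b :: b :: G0) ltac:(pm)) as D''.
      apply (dp _ _ (b :: a :: G0)); [apply (C _ _ D'' b (a :: G0)); pm | pm].
    + apply (dp _ _ (And a b :: a0 :: G2)); [|rewrite H2; pm].
      apply dh_andL.
      apply (dp _ _ (a0 :: a :: b :: G2)); [apply (C _ _ D); rewrite H1; pm | pm].
  - apply dh_orR1; apply (C _ _ D); auto.
  - apply dh_orR2; apply (C _ _ D); auto.
  - destruct (perm_split2 _ _ _ _ HP) as [[E H]|[G2 [H1 H2]]].
    + subst. apply dh_orL.
      * apply (C _ _ (inv_or _ _ _ _ D1 a b (a :: G0) ltac:(rewrite H; pm) a (or_introl eq_refl))). pm.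
      * apply (C _ _ (inv_or _ _ _ _ D2 a b (b :: G0) ltac:(rewrite H; pm) b (or_intror eq_refl))). pm.
    + apply (dp _ _ (Or a b :: a0 :: G2)); [|rewrite H2; pm].
      apply dh_orL.
      * apply (dp _ _ (a0 :: a :: G2)); [apply (C _ _ D1); rewrite H1; pm | pm].
      * apply (dp _ _ (a0 :: b :: G2)); [apply (C _ _ D2); rewrite H1; pm | pm].
  - destruct (perm_split2 _ _ _ _ HP) as [[E H]|[G2 [H1 H2]]].
    + subst. apply dh_n; [auto| |].
      * apply (C _ _ D1). rewrite H; pm.
      * apply (C _ _ D2). rewrite H; pm.
    + apply (dp _ _ (Neg a :: a0 :: G2)); [|rewrite H2; pm].
      apply dh_n; auto.
      * apply (dp _ _ (a0 :: Neg a :: b :: G2)); [apply (C _ _ D1); rewrite H1; pm | pm].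
      * apply (dp _ _ (a0 :: Neg a :: a :: G2)); [apply (C _ _ D2); rewrite H1; pm | pm].
  - destruct (perm_split2 _ _ _ _ HP) as [[E H]|[G2 [H1 H2]]].
    + subst. apply dh_nef; [auto|].
      apply (C _ _ D). rewrite H; pm.
    + apply (dp _ _ (Neg a :: a0 :: G2)); [|rewrite H2; pm].
      apply dh_nef; auto.
      apply (dp _ _ (a0 :: Neg a :: G2)); [apply (C _ _ D); rewrite H1; pm | pm].
  - destruct (perm_split2 _ _ _ _ HP) as [[E H]|[G2 [H1 H2]]].
    + subst. apply dh_copc; [auto|].
      apply (C _ _ D). rewrite H; pm.
    + apply (dp _ _ (Neg a :: a0 :: G2)); [|rewrite H2; pm].
      apply dh_copc; auto.
      apply (dp _ _ (a0 :: Neg a :: b :: G2)); [apply (C _ _ D); rewrite H1; pm | pm].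
  - apply dh_an; auto.
    apply (dp _ _ (a0 :: a :: G0)); [apply (C _ _ D); rewrite HP; pm | pm].
Qed.

Theorem proposition3p2 : forall (Sy : system) (n : nat) (G : list form) (a phi : form),
  dh Sy n (a :: a :: G) phi -> dh Sy n (a :: G) phi.
Proof.
  intros Sy n.
  assert (H : PC Sy n).
  { induction n as [n IHn] using (well_founded_induction lt_wf).
    intros L phi D. apply (contr_step _ _ _ _ D IHn). }
  intros G a phi D. apply (H _ _ D a G). apply Permutation_refl.
Qed.
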